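(* Let $\vartheta\in(0,1)$, let $c,r,\alpha,\beta$ be positive integers, and consider the single-agent trust model described in the context. Suppose $\vartheta>\theta_{\rm crit}:=c/(c+r)$. Then almost surely the agent either (A) quits at some finite time, i.e. $\tau<\infty$, with $A_t=1$ for all $t<\tau$ and $A_t=0$ for all $t\ge\tau$; or (B) places trust forever and learns the truth, i.e. $A_t=1$ for all $t=1,2,\dots$ and $\lim_{t\to\infty}\hat\vartheta_t=\vartheta$. In particular $\mathbb{P}(\hat\vartheta_t\not\to\vartheta \text{ and } \tau=\infty)=0$.
   Context: Single-agent trust model: $\vartheta$ is the institution's true trustworthiness; $(X_t)_{t\in\mathbb{N}}$ are i.i.d. with $\mathbb{P}(X_t=1)=\vartheta$, $\mathbb{P}(X_t=0)=1-\vartheta$. The agent has actions $A_t\in\{0,1\}$ and observes $X_t$ only in rounds with $A_t=1$. Let $\hat S_t=\sum_{s=1}^t X_s\mathbf{1}_{\{A_s=1\}}$, $\hat F_t=\sum_{s=1}^t(1-X_s)\mathbf{1}_{\{A_s=1\}}$, and $\hat\vartheta_t=\frac{\alpha+\hat S_t}{\alpha+\beta+\hat S_t+\hat F_t}$ (posterior mean under a Beta$(\alpha,\beta)$ prior). The agent acts myopically: $A_t=1$ if $r\hat\vartheta_n-c(1-\hat\vartheta_n)\ge 0$ for all $n\in\{0,\dots,t-1\}$, and $A_t=0$ otherwise. The quitting time is $\tau:=\inf\{t\in\mathbb{N}\cup\{\infty\}: r\hat\vartheta_t-c(1-\hat\vartheta_t)<0\}$. *)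

(* Defs.v *)
From HB Require Import structures.
From mathcomp Require Import all_boot all_order all_algebra.
From mathcomp Require Import all_classical all_reals all_analysis.
Set Implicit Arguments. Unset Strict Implicit. Unset Printing Implicit Defensive.
Import Order.TTheory GRing.Theory Num.Theory.
Local Open Scope ring_scope.

Section TrustModel.
Variable R : realType.
Variables (alpha beta c r : nat).
(* x t = X_t (the outcome of round t, t >= 1; x 0 is never used) *)
Variable x : nat -> bool.

Definition post_mean (s f : nat) : R :=
  (alpha + s)%:R / (alpha + beta + s + f)%:R.

Definition trusts (th : R) : bool := 0 <= r%:R * th - c%:R * (1 - th).

(* Recursive computation of (S_hat_t, F_hat_t, b_t) where
   b_t = [for all n in {0..t}, trusts (theta_hat n)], so that A_{t+1} = b_t.
   In round t+1 the outcome X_{t+1} is recorded iff A_{t+1} = 1. *)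
Fixpoint state (t : nat) : nat * nat * bool :=
  match t with
  | 0 => (0%N, 0%N, trusts (post_mean 0 0))
  | t'.+1 =>
      let: (s, f, b) := state t' in
      let s' := if b then (s + x t)%N else s in
      let f' := if b then (f + ~~ x t)%N else f in
      (s', f', b && trusts (post_mean s' f'))
  end.

Definition Shat (t : nat) : nat := (state t).1.1.
Definition Fhat (t : nat) : nat := (state t).1.2.

Definition theta_hat (t : nat) : R := post_mean (Shat t) (Fhat t).

Definition act (t : nat) : bool := [forall n : 'I_t, trusts (theta_hat n)].

(* Sanity facts: the recursion agrees with the paper's definitions
   hat S_t = sum_{s=1}^t X_s 1{A_s = 1},  hat F_t = sum_{s=1}^t (1-X_s) 1{A_s=1}. *)
Lemma state_flag t : (state t).2 = act t.+1.
Proof.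
elim: t => [|t IH].
  rewrite /act /=; apply/idP/forallP => [H i|H]; first by rewrite ord1 /theta_hat /Shat /Fhat /=.
  by have := H ord0; rewrite /theta_hat /Shat /Fhat.
have E : act t.+2 = act t.+1 && trusts (theta_hat t.+1).
  rewrite /act; apply/forallP/andP => [H|[/forallP H1 H2] i].
    split; last by have := H ord_max.
    by apply/forallP => i; have := H (widen_ord (leqnSn _) i).
  case: (ltnP i t.+1) => Hi; first by have := H1 (Ordinal Hi).
  by have -> : i = ord_max by apply/val_inj/eqP; rewrite eqn_leq Hi -ltnS ltn_ord.
rewrite E -IH /theta_hat /Shat /Fhat /=.
by case: (state t) => [[s f] b].
Qed.

Lemma Shat_sum t : Shat t = (\sum_(1 <= s < t.+1) nat_of_bool (x s && act s))%N.
Proof.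
elim: t => [|t IH]; first by rewrite big_geq.
rewrite big_nat_recr //= -IH -(state_flag t) /Shat /=.
by case: (state t) => [[s f] []] /=; rewrite ?andbT ?andbF ?addn0.
Qed.

Lemma Fhat_sum t : Fhat t = (\sum_(1 <= s < t.+1) nat_of_bool (~~ x s && act s))%N.
Proof.
elim: t => [|t IH]; first by rewrite big_geq.
rewrite big_nat_recr //= -IH -(state_flag t) /Fhat /=.
by case: (state t) => [[s f] []] /=; rewrite ?andbT ?andbF ?addn0.
Qed.

(* Quitting time: tau_is k means tau = k < oo, i.e. k is the least time
   with r*theta_hat_k - c*(1-theta_hat_k) < 0. tau = oo iff no such k. *)
Definition tau_is (k : nat) : Prop :=
  ~~ trusts (theta_hat k) /\ (forall n, (n < k)%N -> trusts (theta_hat n)).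
Definition tau_infinite : Prop := forall t, trusts (theta_hat t).

End TrustModel.

Local Open Scope classical_set_scope.
Definition iid_bernoulli (d : measure_display) (T : measurableType d)
  (R : realType) (P : probability T R) (theta : R) (X : nat -> T -> bool) : Prop :=
  (forall t, measurable [set w | X t w]) /\
  (forall (n : nat) (b : nat -> bool),
     P [set w | forall i, (1 <= i <= n)%N -> X i w = b i] =
     (\prod_(1 <= i < n.+1) (if b i then theta else 1 - theta))%:E).

(* Main.v *)
Require Import Defs.
From HB Require Import structures.
From mathcomp Require Import all_boot all_order all_algebra.
From mathcomp Require Import all_classical all_reals all_analysis.
From mathcomp Require Import ring lra.
Import Order.TTheory GRing.Theory Num.Theory.
Import numFieldNormedType.Exports.
Local Open Scope ring_scope.

Section Core.
Variable R : realType.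

Lemma expR_le2 (x : R) : `|x| <= 2^-1 -> expR x <= 1 + x + 2 * x^+2.
Proof.
move=> hx.
have [hx1 hx2] : -(2^-1) <= x /\ x <= 2^-1 by move: hx; rewrite ler_norml => /andP.
have h := expR_ge1Dx (-x); rewrite expRN in h.
have e0 := expR_gt0 x.
have h2 : (1 - x) * expR x <= 1.
  have : (1 - x) * expR x <= (expR x)^-1 * expR x by rewrite ler_pM2r.
  by rewrite mulVf ?gt_eqF.
have p : 0 < 1 - x by lra.
rewrite -(ler_pM2l p); apply: (le_trans h2).
have -> : (1 - x) * (1 + x + 2 * x ^+ 2) = 1 + x^+2 * (1 - 2 * x) by ring.
rewrite lerDl; apply: mulr_ge0; [exact: sqr_ge0| lra].
Qed.

Definition wt (th : R) n (b : {ffun 'I_n -> bool}) : R :=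
  \prod_(i < n) (if b i then th else 1 - th).
Arguments wt th {n} b.

Lemma chernoff_q (th : R) (z : bool -> R) (eps : R) :
  0 < th < 1 -> 0 < eps <= 1 -> `|z true| <= 2 -> `|z false| <= 2 ->
  th * z true + (1 - th) * z false = - eps ->
  exists q : R, 0 < q < 1 /\ forall n,
    \sum_(b : {ffun 'I_n -> bool} | 0 <= \sum_(i < n) z (b i)) wt th b <= q ^+ n.
Proof.
move=> /andP[th0 th1] /andP[e0 e1] z1 z2 zm.
pose lam := eps / 16.
have lam0 : 0 < lam by rewrite /lam divr_gt0.
pose g x := (if x then th else 1 - th) * expR (lam * z x).
pose q := g true + g false.
exists q; split.
  apply/andP; split.
    rewrite /q /g /=.
    have := mulr_gt0 th0 (expR_gt0 (lam * z true)).
    have : 0 <= (1 - th) * expR (lam * z false) by apply: mulr_ge0; rewrite ?expR_ge0 //; lra.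
    lra.
  have hb x : `|z x| <= 2 -> `|lam * z x| <= 2^-1.
    move=> hz; rewrite normrM (gtr0_norm lam0).
    apply: (le_trans (ler_wpM2l (ltW lam0) hz)); rewrite /lam; lra.
  have E1 := expR_le2 _ (hb _ z1).
  have E2 := expR_le2 _ (hb _ z2).
  have s1 : (lam * z true)^+2 <= 4 * lam^+2.
    rewrite exprMn mulrC ler_wpM2r ?sqr_ge0 //.
    have -> : (4 : R) = 2 ^+ 2 by rewrite expr2; lra.
    rewrite -real_normK ?num_real //; apply: lerXn2r => //; rewrite ?nnegrE //.
  have s2 : (lam * z false)^+2 <= 4 * lam^+2.
    rewrite exprMn mulrC ler_wpM2r ?sqr_ge0 //.
    have -> : (4 : R) = 2 ^+ 2 by rewrite expr2; lra.
    rewrite -real_normK ?num_real //; apply: lerXn2r => //; rewrite ?nnegrE //.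
  rewrite /q /g /=.
  have t1 : th * expR (lam * z true) <= th * (1 + lam * z true + 2 * (4 * lam^+2)).
    rewrite ler_pM2l //; lra.
  have t2 : (1 - th) * expR (lam * z false) <= (1 - th) * (1 + lam * z false + 2 * (4 * lam^+2)).
    rewrite ler_pM2l; lra.
  have : th * (1 + lam * z true + 2 * (4 * lam^+2)) + (1 - th) * (1 + lam * z false + 2 * (4 * lam^+2))
     = 1 - lam * eps + 8 * lam^+2.
    have -> : th * (1 + lam * z true + 2 * (4 * lam^+2)) + (1 - th) * (1 + lam * z false + 2 * (4 * lam^+2))
      = 1 + lam * (th * z true + (1 - th) * z false) + 8 * lam^+2 by ring.
    by rewrite zm; ring.
  have : 1 - lam * eps + 8 * lam^+2 < 1.
    rewrite /lam; have -> : 1 - eps / 16 * eps + 8 * (eps / 16) ^+ 2 = 1 - eps^+2 / 32.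
      by rewrite expr2; field.
    rewrite ltrBlDr ltrDl; apply: divr_gt0 => //; exact: exprn_gt0.
  lra.
move=> n.
have Hid : \sum_(b : {ffun 'I_n -> bool}) wt th b * expR (lam * \sum_(i < n) z (b i)) = q ^+ n.
  transitivity (\sum_(b : {ffun 'I_n -> bool}) \prod_(i < n) g (b i)).
    apply: eq_bigr => b _; rewrite /wt mulr_sumr expR_sum -big_split /=.
    by apply: eq_bigr.
  rewrite -(bigA_distr_bigA (fun (i : 'I_n) x => g x)) /=.
  rewrite (eq_bigr (fun _ => q)); last by move=> i _; rewrite big_bool.
  by rewrite prodr_const card_ord.
rewrite -Hid.
have wt0 b : 0 <= wt th b.
  rewrite /wt; apply: prodr_ge0 => i _; case: (b i); lra.
apply: (@le_trans _ _ (\sum_(b : {ffun 'I_n -> bool} | 0 <= \sum_(i < n) z (b i))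
     wt th b * expR (lam * \sum_(i < n) z (b i)))).
  apply: ler_sum => b hb; rewrite -{1}(mulr1 (wt th b)) ler_wpM2l //.
  apply: (le_trans _ (expR_ge1Dx _)); rewrite lerDl; exact: mulr_ge0 (ltW lam0) hb.
rewrite [leRHS](bigID (fun b : {ffun 'I_n -> bool} => 0 <= \sum_(i < n) z (b i))) /= lerDl.
by apply: sumr_ge0 => b _; apply: mulr_ge0 => //; exact: expR_ge0.
Qed.


Local Open Scope classical_set_scope.

Section Prob.
Variables (d : measure_display) (T : measurableType d) (P : probability T R).
Variables (th : R) (X : nat -> T -> bool).
Hypothesis Hiid : iid_bernoulli P th X.

Definition pat n w : {ffun 'I_n -> bool} := [ffun i : 'I_n => X i.+1 w].
Definition Cyl n (b : {ffun 'I_n -> bool}) := [set w | pat n w = b].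
Definition ext n (b : {ffun 'I_n -> bool}) (i : nat) : bool :=
  if i is k.+1 then (if (insub k : option 'I_n) is Some j then b j else false) else false.
Arguments Cyl {n} b.
Arguments ext {n} b i.

Lemma Cyl_eq n (b : {ffun 'I_n -> bool}) : Cyl b = [set w | forall i, (1 <= i <= n)%N -> X i w = ext b i].
Proof.
apply/seteqP; split => w /=.
  move=> <- [|i] //= hi.
  case: insubP => [j _ vj|]; last by rewrite hi.
  by rewrite ffunE vj.
move=> H; apply/ffunP => i; rewrite ffunE H ?ltn_ord //= valK //.
Qed.

Lemma cylN_measurable n (f : nat -> bool) :
  measurable [set w | forall i, (1 <= i <= n)%N -> X i w = f i].
Proof.
elim: n => [|n IH].
  by rewrite (_ : [set w | _] = setT); [exact: measurableT|apply/seteqP; split => // w _ [|i]].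
rewrite (_ : [set w | _] = [set w | forall i, (1 <= i <= n)%N -> X i w = f i]
   `&` [set w | X n.+1 w = f n.+1]); last first.
  apply/seteqP; split => w /=.
    move=> H; split; last by apply: H; rewrite ltnS leqnn.
    by move=> i /andP[h1 h2]; apply: H; rewrite h1 /=; exact: leqW.
  move=> [H1 H2] i /andP[h1 h2]; move: h2; rewrite leq_eqVlt => /orP[/eqP -> //|h2].
  by apply: H1; rewrite h1 -ltnS.
apply: measurableI => //.
case: (f n.+1).
  rewrite (_ : [set w | X n.+1 w = true] = [set w | X n.+1 w]); first exact: Hiid.1.
  by apply/seteqP; split => w /=.
rewrite (_ : [set w | X n.+1 w = false] = ~` [set w | X n.+1 w]).
  by apply: measurableC; exact: Hiid.1.
by apply/seteqP; split => w /=; case: (X n.+1 w).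
Qed.

Lemma Cyl_measurable n (b : {ffun 'I_n -> bool}) : measurable (@Cyl n b).
Proof. rewrite Cyl_eq; exact: cylN_measurable. Qed.

Lemma P_Cyl n (b : {ffun 'I_n -> bool}) : P (@Cyl n b) = (wt th b)%:E.
Proof.
rewrite Cyl_eq Hiid.2; congr EFin.
rewrite (big_add1 _ _ 0 n.+1) /= big_mkord; apply: eq_bigr => i _ /=.
by rewrite valK.
Qed.

Lemma bigU_mem (I : eqType) (s : seq I) (Q : pred I) (F : I -> set T) w :
  (\big[setU/set0]_(i <- s | Q i) F i) w <-> exists i, [/\ i \in s, Q i & F i w].
Proof.
elim: s => [|i s IH]; first by rewrite big_nil; split => // -[j []].
rewrite big_cons; case: ifP => Qi.
  split.
    move=> [Fi|/IH [j [js Qj Fj]]]; first by exists i; rewrite mem_head.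
    by exists j; rewrite in_cons js orbT.
  move=> [j [/predU1P [->|js] Qj Fj]]; first by left.
  by right; apply/IH; exists j.
rewrite IH; split; move=> [j [js Qj Fj]].
  by exists j; rewrite in_cons js orbT.
exists j; split => //; move: js; rewrite in_cons => /predU1P [ej|//].
by move: Qi; rewrite -ej Qj.
Qed.

Lemma bigU_le (I : Type) (s : seq I) (Q : pred I) (F : I -> set T) :
  (forall i, measurable (F i)) ->
  (P (\big[setU/set0]_(i <- s | Q i) F i) <= \sum_(i <- s | Q i) P (F i))%E.
Proof.
move=> mF; elim: s => [|i s IH]; first by rewrite !big_nil measure0.
rewrite !big_cons; case: (Q i) => //.
apply: le_trans (measureU2 _ _ _) _ => //; first exact: bigsetU_measurable.
exact: leeD2l.
Qed.

Lemma tail_negligible (z : bool -> R) (eps : R) :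
  0 < th < 1 -> 0 < eps <= 1 -> `|z true| <= 2 -> `|z false| <= 2 ->
  th * z true + (1 - th) * z false = - eps ->
  P.-negligible (lim_sup_set (fun n => [set w | 0 <= \sum_(i < n) z (X i.+1 w)])).
Proof.
move=> hth he hz1 hz2 hm.
have [q [/andP[q0 q1] Hq]] := @chernoff_q th z eps hth he hz1 hz2 hm.
set F := (fun n => _).
have FE n : F n = \big[setU/set0]_(b : {ffun 'I_n -> bool} | 0 <= \sum_(i < n) z (b i)) Cyl b.
  apply/seteqP; split => w /=.
    move=> H; apply/bigU_mem; exists (pat n w); split => //; first exact: mem_index_enum.
    by under eq_bigr do rewrite ffunE.
  move=> /bigU_mem [b [_ Qb Cb]]; move: Qb; rewrite -Cb.
  by under eq_bigr do rewrite ffunE.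
have mF n : measurable (F n).
  rewrite FE; apply: bigsetU_measurable => b _; exact: Cyl_measurable.
have PF n : (P (F n) <= (q ^+ n)%:E)%E.
  rewrite FE; apply: le_trans; first exact: (bigU_le _ _ _ _ (@Cyl_measurable n)).
  under eq_bigr do rewrite P_Cyl.
  by rewrite sumEFin lee_fin; exact: Hq.
have mL : measurable (lim_sup_set F).
  apply: bigcapT_measurable => k; apply: bigcup_measurable => j _; exact: mF.
apply/negligibleP => //; apply: lim_sup_set_cvg0 => //.
apply: (@le_lt_trans _ _ (\sum_(0 <= n <oo) ((q ^+ n)%:E))%E).
  by apply: lee_nneseries => [n _ _|n _]; [exact: measure_ge0|exact: PF].
apply: (@le_lt_trans _ _ ((1 / (1 - q))%:E)); last exact: ltry.
apply: lime_le.
  by apply: is_cvg_nneseries => n _ _; rewrite lee_fin exprn_ge0 // ltW.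
apply: nearW => n; rewrite sumEFin lee_fin.
have qn : `|q| < 1 by rewrite gtr0_norm.
apply: le_trans (geometric_le_lim n ler01 q0 qn).
by rewrite /series /=; apply: ler_sum => i _; rewrite mul1r.
Qed.

End Prob.
End Core.

Local Open Scope classical_set_scope.

Section Det.
Variables (R : realType) (alpha beta c r : nat) (x : nat -> bool).
Hypothesis tinf : tau_infinite R alpha beta c r x.

Lemma act_inf t : act R alpha beta c r x t.
Proof. by apply/forallP => i; exact: tinf. Qed.

Lemma Shat_inf t : ((Shat R alpha beta c r x t)%:R : R) = \sum_(i < t) ((x i.+1)%:R : R).
Proof.
rewrite Shat_sum natr_sum (big_add1 _ _ 0 t.+1) /= big_mkord.
by apply: eq_bigr => i _; rewrite act_inf andbT.
Qed.

Lemma SF_inf t : (Shat R alpha beta c r x t + Fhat R alpha beta c r x t)%N = t.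
Proof.
rewrite Shat_sum Fhat_sum -big_split /=.
rewrite (eq_big_nat _ _ (F2 := fun _ => 1%N)); last by move=> i _; rewrite act_inf; case: (x i).
by rewrite sum_nat_const_nat subn1 muln1.
Qed.

Lemma theta_hat_inf t : theta_hat R alpha beta c r x t =
  (alpha%:R + \sum_(i < t) ((x i.+1)%:R : R)) / (alpha + beta + t)%:R.
Proof.
rewrite /theta_hat /post_mean -Shat_inf natrD; congr (_ / _%:R).
by rewrite -addnA SF_inf.
Qed.
End Det.

Lemma sum_shift (R : realType) (f : nat -> R) (a : R) j :
  \sum_(i < j) (f i + a) = \sum_(i < j) f i + a *+ j.
Proof. by rewrite big_split /= sumr_const card_ord. Qed.


Lemma conv_inf (R : realType) alpha beta c r (x : nat -> bool) (th : R) :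
  0 < th < 1 -> (0 < alpha)%N -> tau_infinite R alpha beta c r x ->
  (forall k : nat, exists N, forall j, (N <= j)%N ->
     \sum_(i < j) (((x i.+1)%:R : R) + - (th + (k.+1%:R)^-1)) < 0) ->
  (forall k : nat, exists N, forall j, (N <= j)%N ->
     \sum_(i < j) (- ((x i.+1)%:R : R) + (th - (k.+1%:R)^-1)) < 0) ->
  theta_hat R alpha beta c r x t @[t --> \oo] --> th.
Proof.
move=> /andP[th0 th1] a0 tinf Hp Hm.
apply/cvgrPdist_lt => e e0.
set k := Num.truncn (2 / e).
have hk : 2 / e < k.+1%:R := truncnS_gt _.
set K : R := k.+1%:R.
have K0 : 0 < K by rewrite /K ltr0n.
set eps := K^-1.
have eK : eps * K = 1 by rewrite /eps mulVf ?gt_eqF.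
have eps0 : 0 < eps by rewrite /eps invr_gt0.
have h2 : 2 < K * e by rewrite -ltr_pdivrMr.
have epse : eps < e / 2.
  rewrite -(ltr_pM2r K0) eK; lra.
have [Np HNp] := Hp k.
have [Nm HNm] := Hm k.
exists (maxn (maxn Np Nm) ((alpha + beta) * k)) => // j /=.
rewrite !geq_max => /andP[/andP[hp hm] hk'].
have sp : \sum_(i < j) ((x i.+1)%:R : R) - (th + eps) * j%:R < 0.
  have h := HNp j hp; rewrite (@sum_shift R (fun i => ((x i.+1)%:R : R))) in h.
  by rewrite mulr_natr -mulNrn; exact: h.
have sm : - \sum_(i < j) ((x i.+1)%:R : R) + (th - eps) * j%:R < 0.
  have h := HNm j hm; rewrite (@sum_shift R (fun i => - ((x i.+1)%:R : R))) sumrN in h.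
  by rewrite mulr_natr; exact: h.
rewrite theta_hat_inf //.
set S := \sum_(i < j) _ in sp sm *.
have hk2 : ((alpha + beta) * k)%:R <= (j%:R : R) by rewrite ler_nat.
rewrite natrM natrD in hk2.
rewrite !natrD.
set a : R := alpha%:R in hk2 *.
set b : R := beta%:R in hk2 *.
set J : R := j%:R in hk2 sp sm *.
have a1 : 1 <= a by rewrite /a ler1n.
have b0 : 0 <= b by rewrite /b ler0n.
have J0 : 0 <= J by rewrite /J ler0n.
set D := a + b + J.
have D0 : 0 < D by rewrite /D; lra.
have KE : K = k%:R + 1 by rewrite /K -natr1.
have f0 : (a + b) * K <= D by rewrite KE /D; lra.
have f1 : a + b <= eps * D.
  have := ler_wpM2l (ltW eps0) f0.
  have -> : eps * ((a + b) * K) = (a + b) * (eps * K) by ring.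
  by rewrite eK mulr1.
have f2 : eps * J <= eps * D by rewrite ler_wpM2l ?ltW // /D; lra.
have f3 : 2 * (eps * D) < e * D.
  have : eps * D < e / 2 * D by rewrite ltr_pM2r.
  lra.
have f4 : th * a <= a by rewrite ger_pMl; lra.
have f5 : th * b <= b by rewrite -{2}(mul1r b) ler_wpM2r //; lra.
have f6 : 0 <= th * a by apply: mulr_ge0; lra.
have f7 : 0 <= th * b by apply: mulr_ge0; lra.
have -> : th - (a + S) / D = (th * D - a - S) / D by field; lra.
rewrite normrM normfV (gtr0_norm D0) ltr_pdivrMr // ltr_norml.
apply/andP; split; rewrite /D in f1 f2 f3 *; lra.
Qed.


Lemma not_limsup (T : Type) (F : (set T)^nat) w :
  ~ lim_sup_set F w -> exists N, forall j, (N <= j)%N -> ~ F j w.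
Proof.
move=> H; have [//|hn] := pselect (exists N, forall j, (N <= j)%N -> ~ F j w).
exfalso; apply: H => n _ /=.
have [[j hj Fj]|hj] := pselect (exists2 j, (n <= j)%N & F j w); first by exists j.
by exfalso; apply: hn; exists n => j hnj Fj; apply: hj; exists j.
Qed.

Theorem lemma3p2 (d : measure_display) (T : measurableType d) (R : realType)
  (P : probability T R) (theta : R) (c r alpha beta : nat)
  (X : nat -> T -> bool) :
  0 < theta < 1 ->
  (0 < c)%N -> (0 < r)%N -> (0 < alpha)%N -> (0 < beta)%N ->
  iid_bernoulli P theta X ->
  c%:R / (c + r)%:R < theta ->
  (P.-negligible [set w | ~ (
     (* (A) the agent quits at a finite time tau *)
     (exists k : nat, @tau_is R alpha beta c r (X^~ w) k /\
        (forall t, (1 <= t)%N ->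
           @act R alpha beta c r (X^~ w) t = (t <= k)%N))
     \/
     (* (B) trust forever and learn the truth *)
     ((forall t, (1 <= t)%N -> @act R alpha beta c r (X^~ w) t) /\
      (@theta_hat R alpha beta c r (X^~ w) t @[t --> \oo] --> theta)))]
   /\
   P.-negligible [set w | ~ (@theta_hat R alpha beta c r (X^~ w) t @[t --> \oo] --> theta)
                          /\ @tau_infinite R alpha beta c r (X^~ w)]).
Proof.
move=> hth c0 r0 a0 b0 Hiid hcrit.
have /andP[th0 th1] := hth.
pose eps (k : nat) : R := (k.+1%:R)^-1.
have eps0 k : 0 < eps k <= 1.
  by rewrite /eps invr_gt0 ltr0n /= invf_le1 ?ltr0n // ler1n.
pose zp k (y : bool) : R := (y%:R : R) + - (theta + eps k).
pose zm k (y : bool) : R := - (y%:R : R) + (theta - eps k).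
pose Fp k := fun n => [set w | 0 <= \sum_(i < n) zp k (X i.+1 w)].
pose Fm k := fun n => [set w | 0 <= \sum_(i < n) zm k (X i.+1 w)].
have NN : P.-negligible (\bigcup_k (lim_sup_set (Fp k) `|` lim_sup_set (Fm k))).
  apply: negligible_bigcup => k; have /andP[e0 e1] := eps0 k; apply: negligibleU.
    apply: (@tail_negligible R d T P theta X Hiid (zp k) (eps k)) => //;
      rewrite /zp /= ?mulr1n ?mulr0n; first (rewrite ler_norml; apply/andP; split; lra);
      first (rewrite ler_norml; apply/andP; split; lra).
    ring.
  apply: (@tail_negligible R d T P theta X Hiid (zm k) (eps k)) => //;
    rewrite /zm /= ?mulr1n ?mulr0n; first (rewrite ler_norml; apply/andP; split; lra);
    first (rewrite ler_norml; apply/andP; split; lra).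
  ring.
have bad : P.-negligible [set w | ~ (@theta_hat R alpha beta c r (X^~ w) t @[t --> \oo] --> theta)
                          /\ @tau_infinite R alpha beta c r (X^~ w)].
  apply: negligibleS NN => w /= [ncvg tinf].
  have [//|nN] := pselect ((\bigcup_k (lim_sup_set (Fp k) `|` lim_sup_set (Fm k))) w).
  exfalso; apply: ncvg; apply: (@conv_inf R alpha beta c r (X^~ w) theta hth a0 tinf) => k.
    have nF : ~ lim_sup_set (Fp k) w by move=> h; apply: nN; exists k => //; left.
    have [N HN] := not_limsup _ _ _ nF; exists N => j hj.
    by have := HN j hj; rewrite /Fp /= => h; rewrite ltNge; apply/negP.
  have nF : ~ lim_sup_set (Fm k) w by move=> h; apply: nN; exists k => //; right.
  have [N HN] := not_limsup _ _ _ nF; exists N => j hj.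
  by have := HN j hj; rewrite /Fm /= => h; rewrite ltNge; apply/negP.
split => //.
apply: negligibleS bad => w /= H.
have tinf : tau_infinite R alpha beta c r (X^~ w).
  move=> t; apply/negPn/negP => nt; apply: H; left.
  have ex : exists t, ~~ trusts c r (theta_hat R alpha beta c r (X^~ w) t) by exists t.
  case: (ex_minnP ex) => k nk kmin; exists k; split.
    split => // n hn; apply/negPn/negP => hn'.
    by have := kmin _ hn'; rewrite leqNgt hn.
  move=> t1 _; rewrite /act; case: (leqP t1 k) => hk.
    apply/forallP => i; apply/negPn/negP => hi.
    by have := kmin _ hi; rewrite leqNgt (leq_trans (ltn_ord i) hk).
  apply/negbTE/negP => /forallP /(_ (Ordinal hk)) /=.
  by rewrite (negbTE nk).
split => // hc; apply: H; right; split => // t _; exact: act_inf.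
Qed.
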